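(* For any prime $p>3$, $$\binom{\frac12p-1}{p-1}\binom{2p-1}{p-1}\equiv 1-\frac7{12}p^3B_{p-3}\pmod{p^4}.$$
   Context: For rational $x$ and integer $n\ge0$, $\binom{x}{n}=\frac{x(x-1)\cdots(x-n+1)}{n!}$. $B_0,B_1,\dots$ are the Bernoulli numbers. A congruence $a\equiv b\pmod{p^m}$ between rational numbers means that $(a-b)/p^m$ is a rational number whose denominator is not divisible by $p$. *)

(* Defs.v *)
From HB Require Import structures.
From mathcomp Require Import all_boot all_order all_algebra.
Set Implicit Arguments. Unset Strict Implicit. Unset Printing Implicit Defensive.
Import Order.TTheory GRing.Theory Num.Theory.
Local Open Scope ring_scope.

Definition binq (x : rat) (n : nat) : rat :=
  (\prod_(i < n) (x - i%:R)) / (n`!)%:R.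

(* Bernoulli numbers via the standard recurrence
   sum_{k=0}^{n} C(n+1,k) B_k = 0 (n >= 1), B_0 = 1 (so B_1 = -1/2).
   bern_seq n = [:: B_0; ...; B_n]. *)
Fixpoint bern_seq (n : nat) : seq rat :=
  match n with
  | 0%N => [:: 1]
  | n'.+1 =>
      let s := bern_seq n' in
      rcons s (- ((n'.+2)%:R)^-1 *
               \sum_(k < n'.+1) ('C(n'.+2, k))%:R * nth 0 s k)
  end.

Definition bernoulli (n : nat) : rat := nth 0 (bern_seq n) n.

Definition congr_mod_pow (p m : nat) (a b : rat) : Prop :=
  ~~ (p%:Z %| denq ((a - b) / (p ^ m)%:R))%Z.

(* Main.v *)
Require Import Defs.
From HB Require Import structures.
From mathcomp Require Import all_boot all_order all_algebra.
From mathcomp Require Import ring zify.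
Import Order.TTheory GRing.Theory Num.Theory.
Local Open Scope ring_scope.

Lemma size_bern n : size (bern_seq n) = n.+1.
Proof. by elim: n => //= n IH; rewrite size_rcons IH. Qed.

Lemma nth_bern n k : (k <= n)%N -> nth 0 (bern_seq n) k = bernoulli k.
Proof.
elim: n => [|n IH]; first by rewrite leqn0 => /eqP ->.
rewrite leq_eqVlt => /orP [/eqP -> //|hk].
by rewrite /= nth_rcons size_bern hk IH.
Qed.

Lemma bernS n : bernoulli n.+1 =
  - ((n.+2)%:R)^-1 * \sum_(k < n.+1) ('C(n.+2, k))%:R * bernoulli k.
Proof.
rewrite {1}/bernoulli /= nth_rcons size_bern ltnn eqxx.
congr (_ * _); apply: eq_bigr => k _; by rewrite nth_bern // -ltnS.
Qed.

Lemma bern_rec0 n : \sum_(k < n.+2) ('C(n.+2, k))%:R * bernoulli k = 0.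
Proof.
rewrite big_ord_recr /= binSn bernS.
set s := \sum_(_ < _) _.
have h : (n.+2)%:R != 0 :> rat by rewrite pnatr_eq0.
by rewrite mulrA mulrN mulfV // mulN1r addrN.
Qed.

Lemma bern0 : bernoulli 0 = 1. Proof. by []. Qed.

Lemma bern_beta m : \sum_(i < m.+1) ('C(m, i))%:R * bernoulli i =
  bernoulli m + (m == 1)%N%:R.
Proof.
case: m => [|[|n]].
- by rewrite big_ord1 bin0 mul1r addr0.
- rewrite !big_ord_recr big_ord0 /= add0r.
  have -> : 'C(1, 0)%:R = 1 :> rat by [].
  by rewrite !mul1r bern0 addrC.
- rewrite big_ord_recr bern_rec0 /= binn add0r.
  have -> : 1%:R = 1 :> rat by []. by rewrite mul1r addr0.
Qed.

Lemma sum_widen (n N : nat) (F : nat -> rat) : (n <= N)%N ->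
  (forall i, (n <= i)%N -> (i < N)%N -> F i = 0) ->
  \sum_(i < N) F i = \sum_(i < n) F i.
Proof.
move=> hn hF; rewrite (big_ord_widen N F hn) [RHS]big_mkcond /=.
rewrite big_mkcond /=; apply: eq_bigr => i _.
by case: ltnP => // h; rewrite hF.
Qed.

Lemma sum_rev (n : nat) (F : nat -> rat) :
  \sum_(i < n) F i = \sum_(i < n) F (n - i.+1)%N.
Proof. by rewrite -(big_mkord xpredT) big_rev_mkord subn0. Qed.

Lemma bin_swap n i l : ('C(n, i) * 'C(n - i, l) = 'C(n, l) * 'C(n - l, i))%N.
Proof.
case: (leqP (i + l) n) => h.
  have hi : (i <= n)%N by lia.
  have hl : (l <= n)%N by lia.
  have e1 := bin_fact (_ : l <= n - i)%N.
  have e2 := bin_fact hi.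
  have e3 := bin_fact (_ : i <= n - l)%N.
  have e4 := bin_fact hl.
  have K : (0 < i`! * (l`! * (n - i - l)`!))%N by rewrite !muln_gt0 !fact_gt0.
  apply/eqP; rewrite -(eqn_pmul2r K); apply/eqP.
  have -> : ('C(n, i) * 'C(n - i, l) * (i`! * (l`! * (n - i - l)`!)) =
     'C(n, i) * (i`! * ('C(n - i, l) * (l`! * (n - i - l)`!))))%N by ring.
  rewrite e1; last by lia.
  rewrite e2 (_ : (n - i - l) = (n - l - i))%N; last by lia.
  have -> : ('C(n, l) * 'C(n - l, i) * (i`! * (l`! * (n - l - i)`!)) =
     'C(n, l) * (l`! * ('C(n - l, i) * (i`! * (n - l - i)`!))))%N by ring.
  rewrite e3; last by lia.
  by rewrite e4.
have -> : ('C(n, i) * 'C(n - i, l) = 0)%N.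
  case: (leqP i n) => hi.
    by rewrite (@bin_small (n - i) l) ?muln0 //; lia.
  by rewrite (@bin_small n i).
case: (leqP l n) => hl.
  by rewrite (@bin_small (n - l) i) ?muln0 //; lia.
by rewrite (@bin_small n l).
Qed.

Definition G (k : nat) (x : rat) :=
  \sum_(i < k.+2) ('C(k.+1, i))%:R * bernoulli i * x ^+ (k.+1 - i).

Lemma expD1_widen n N (x : rat) : (n < N)%N ->
  (x + 1) ^+ n = \sum_(l < N) ('C(n, l))%:R * x ^+ l.
Proof.
move=> hn; rewrite exprD1n (@sum_widen _ _ (fun l => ('C(n, l))%:R * x ^+ l) hn).
  by apply: eq_bigr => i _; rewrite mulr_natl.
by move=> i hi _; rewrite bin_small // mul0r.
Qed.

Lemma G_shift k x : G k (x + 1) = \sum_(l < k.+2)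
   ('C(k.+1, l))%:R * x ^+ l * (bernoulli (k.+1 - l) + ((k.+1 - l) == 1)%N%:R).
Proof.
rewrite /G.
rewrite (eq_bigr (fun i : 'I_k.+2 => \sum_(l < k.+2) ('C(k.+1, i))%:R * bernoulli i * (('C(k.+1 - i, l))%:R * x ^+ l))); last first.
  move=> i _; rewrite (@expD1_widen _ k.+2) ?mulr_sumr //; lia.
rewrite exchange_big /=; apply: eq_bigr => l _.
rewrite -bern_beta mulr_sumr.
have hkl : ((k.+1 - l).+1 <= k.+2)%N by lia.
rewrite -[RHS](@sum_widen _ _ (fun i => ('C(k.+1, l))%:R * x ^+ l * (('C(k.+1 - l, i))%:R * bernoulli i)) hkl).
  apply: eq_bigr => i _.
  have e := congr1 (fun n => n%:R : rat) (bin_swap k.+1 i l); rewrite /= !natrM in e.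
  transitivity ((('C(k.+1, i))%:R * ('C(k.+1 - i, l))%:R) * bernoulli i * x ^+ l); first by ring.
  by rewrite e; ring.
by move=> i hi _; rewrite (@bin_small (k.+1 - l) i) // mul0r mulr0.
Qed.

Lemma G_rev k x : G k x =
  \sum_(l < k.+2) ('C(k.+1, l))%:R * x ^+ l * bernoulli (k.+1 - l).
Proof.
rewrite /G (sum_rev _ (fun i => ('C(k.+1, i))%:R * bernoulli i * x ^+ (k.+1 - i))); apply: eq_bigr => l _.
have hl : (l <= k.+1)%N by rewrite -ltnS.
rewrite (_ : k.+2 - l.+1 = k.+1 - l)%N; last by lia.
rewrite subKn // bin_sub //; ring.
Qed.

Lemma G_step k x : G k (x + 1) - G k x = (k.+1)%:R * x ^+ k.
Proof.
rewrite G_shift G_rev -sumrB.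
under eq_bigr => l _ do rewrite mulrDr addrC addKr.
rewrite !big_ord_recr /= big1.
  rewrite subnn subSnn /= binSn add0r.
  have h1 : (true : nat)%:R = 1 :> rat by [].
  have h0 : (false : nat)%:R = 0 :> rat by [].
  by rewrite h1 h0 mulr1 mulr0 addr0.
move=> [l hl] _ /=; rewrite (_ : (k.+1 - l == 1)%N = false) ?mulr0 //.
apply/negbTE; lia.
Qed.

Lemma faulhaber k n : (k.+1)%:R * \sum_(m < n) (m%:R : rat) ^+ k = G k n%:R - G k 0.
Proof.
elim: n => [|n IH]; first by rewrite big_ord0 mulr0 subrr.
rewrite big_ord_recr /= mulrDr IH.
have -> : (n.+1)%:R = n%:R + 1 :> rat by rewrite mulrSr.
rewrite -(G_step k n%:R); ring.
Qed.

Lemma sum_pairs h (F : nat -> rat) :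
  \sum_(m < h.*2) F m.+1 = \sum_(j < h) (F (j.*2.+2) + F (j.*2.+1)).
Proof.
elim: h => [|h IH]; first by rewrite !big_ord0.
rewrite doubleS !big_ord_recr /= IH -!addrA; congr (_ + _); exact: addrC.
Qed.

Lemma split2 h (F : nat -> rat) : \sum_(m < h.*2) F m.+1 =
  \sum_(j < h) (F (j.+1).*2 + F (h.*2.+1 - (j.+1).*2)%N).
Proof.
rewrite sum_pairs !big_split /=; congr (_ + _).
rewrite (sum_rev _ (fun j => F j.*2.+1)); apply: eq_bigr => j _.
congr F; have := ltn_ord j; lia.
Qed.

Lemma split1 h (F : nat -> rat) : \sum_(m < h.*2) F m.+1 =
  \sum_(j < h) (F j.+1 + F (h.*2.+1 - j.+1)%N).
Proof.
rewrite big_split /= -[in LHS]addnn big_split_ord /=; congr (_ + _).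
rewrite (sum_rev _ (fun j => F (h + j).+1)); apply: eq_bigr => j _.
congr F; have := ltn_ord j; lia.
Qed.

Lemma prod_split1 h (F : nat -> rat) : \prod_(m < h.*2) F m.+1 =
  \prod_(j < h) (F j.+1 * F (h.*2.+1 - j.+1)%N).
Proof.
rewrite big_split /= -[in LHS]addnn big_split_ord /=; congr (_ * _).
rewrite -(big_mkord xpredT (fun j => F (h + j).+1)) big_rev_mkord subn0.
apply: eq_bigr => j _.
congr F; have := ltn_ord j; lia.
Qed.

Section PInt.
Variable p : nat.
Hypothesis hp : prime p.
Hypothesis hp3 : (3 < p)%N.

Definition pint (x : rat) := ~~ (p %| `|denq x|)%N.

Lemma pintP x : pint x <-> exists (a : int) (b : nat), ~~ (p %| b)%N /\ x = a%:~R / b%:R.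
Proof.
split.
  move=> h; exists (numq x), `|denq x|%N; split => //.
  rewrite -[in LHS](divq_num_den x); congr (_ / _).
  by rewrite -{1}absz_denq.
move=> [a [b [hb ->]]]; rewrite /pint; apply: contra hb.
set y := (a%:~R / b%:R : rat) => hd.
have b0 : b != 0%N.
  apply/negP => /eqP b0; move: hd; rewrite /y b0 invr0 mulr0.
  have -> : denq 0 = 1 by []. by rewrite dvdn1 => /eqP p1; move: hp; rewrite p1.
have hy : y * b%:R = a%:~R by rewrite /y divfK // pnatr_eq0.
have e : numq y * b%:Z = a * denq y.
  apply: (@intr_inj rat); rewrite !rmorphM /= numqE -hy.
  by rewrite -!mulrA (mulrC (denq y)%:~R).
have : (`|denq y| %| `|numq y| * b)%N.
  have -> : (`|numq y| * b)%N = `|(numq y * b%:Z)%R|%N by rewrite abszM.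
  by rewrite e abszM dvdn_mull.
rewrite Gauss_dvdr; first exact: dvdn_trans.
by rewrite coprime_sym coprime_num_den.
Qed.

Lemma ndvd_neq0 (b : nat) : ~~ (p %| b)%N -> b%:R != 0 :> rat.
Proof. by rewrite pnatr_eq0; apply: contraNneq => ->; rewrite dvdn0. Qed.

Lemma pint_int (a : int) : pint a%:~R.
Proof. by rewrite /pint denq_int /= dvdn1; case: p hp => // [[]]. Qed.

Lemma pint_nat (n : nat) : pint n%:R.
Proof. exact: (pint_int n). Qed.

Lemma pint0 : pint 0. Proof. exact: (pint_nat 0). Qed.
Lemma pint1 : pint 1. Proof. exact: (pint_nat 1). Qed.

Lemma pintD [x y : rat] : pint x -> pint y -> pint (x + y).
Proof.
move=> /pintP [a1 [b1 [h1 ->]]] /pintP [a2 [b2 [h2 ->]]]; apply/pintP.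
exists (a1 * b2%:Z + a2 * b1%:Z), (b1 * b2)%N; split.
  by rewrite Euclid_dvdM // negb_or h1 h2.
have n1 := @ndvd_neq0 _ h1; have n2 := @ndvd_neq0 _ h2.
rewrite natrM rmorphD !rmorphM /=. field. by rewrite n1 n2.
Qed.

Lemma pintM [x y : rat] : pint x -> pint y -> pint (x * y).
Proof.
move=> /pintP [a1 [b1 [h1 ->]]] /pintP [a2 [b2 [h2 ->]]]; apply/pintP.
exists (a1 * a2), (b1 * b2)%N; split.
  by rewrite Euclid_dvdM // negb_or h1 h2.
have n1 := @ndvd_neq0 _ h1; have n2 := @ndvd_neq0 _ h2.
rewrite natrM !rmorphM /=. field. by rewrite n1 n2.
Qed.

Lemma pintN [x : rat] : pint x -> pint (- x).
Proof. by rewrite /pint denqN. Qed.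

Lemma pintB [x y : rat] : pint x -> pint y -> pint (x - y).
Proof. by move=> hx hy; apply: pintD => //; apply: pintN. Qed.

Lemma pintX [x : rat] (n : nat) : pint x -> pint (x ^+ n).
Proof. by move=> hx; elim: n => [|n IH]; rewrite ?expr0 ?pint1 // exprS pintM. Qed.

Lemma pint_sum (I : Type) (r : seq I) (P : pred I) (F : I -> rat) :
  (forall i, P i -> pint (F i)) -> pint (\sum_(i <- r | P i) F i).
Proof.
move=> h; elim/big_rec: _ => [|i x Pi hx]; first exact: pint0.
by apply: pintD => //; apply: h.
Qed.

Lemma pint_prod (I : Type) (r : seq I) (P : pred I) (F : I -> rat) :
  (forall i, P i -> pint (F i)) -> pint (\prod_(i <- r | P i) F i).
Proof.
move=> h; elim/big_rec: _ => [|i x Pi hx]; first exact: pint1.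
by apply: pintM => //; apply: h.
Qed.

Lemma pint_invn (b : nat) : ~~ (p %| b)%N -> pint (b%:R)^-1.
Proof. move=> hb; apply/pintP; exists 1, b; split => //; by rewrite mul1r. Qed.

Lemma pnat_neq0 : p%:R != 0 :> rat.
Proof. by rewrite pnatr_eq0 -lt0n prime_gt0. Qed.

Definition cong (m : nat) (x y : rat) := pint ((x - y) / (p%:R ^+ m)).

Lemma cong_refl m x : cong m x x.
Proof. by rewrite /cong subrr mul0r pint0. Qed.

Lemma cong_sym [m : nat] [x y : rat] : cong m x y -> cong m y x.
Proof. by rewrite /cong -opprB mulNr => /pintN; rewrite opprK. Qed.

Lemma cong_trans [m : nat] [x y z : rat] : cong m x y -> cong m y z -> cong m x z.
Proof.
move=> h1 h2; have := pintD h1 h2.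
by rewrite -mulrDl addrA subrK.
Qed.

Lemma congD [m : nat] [x y u v : rat] : cong m x y -> cong m u v -> cong m (x + u) (y + v).
Proof.
move=> h1 h2; have := pintD h1 h2; rewrite /cong -mulrDl.
by have -> : x - y + (u - v) = x + u - (y + v) by ring.
Qed.

Lemma congN [m : nat] [x y : rat] : cong m x y -> cong m (- x) (- y).
Proof.
move=> h; have := pintN h; rewrite /cong -mulNr.
by have -> : - (x - y) = - x - - y by ring.
Qed.

Lemma congB [m : nat] [x y u v : rat] : cong m x y -> cong m u v -> cong m (x - u) (y - v).
Proof. by move=> h1 h2; apply: congD => //; apply: congN. Qed.

Lemma congMl [m : nat] [c x y : rat] : pint c -> cong m x y -> cong m (c * x) (c * y).
Proof.
move=> hc h; have := pintM hc h; rewrite /cong mulrA.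
by have -> : c * (x - y) = c * x - c * y by ring.
Qed.

Lemma congMr [m : nat] [c x y : rat] : pint c -> cong m x y -> cong m (x * c) (y * c).
Proof. by rewrite ![_ * c]mulrC; apply: congMl. Qed.

Lemma congM [m : nat] [x y u v : rat] : pint x -> pint v -> cong m x y -> cong m u v ->
  cong m (x * u) (y * v).
Proof.
move=> hx hv h1 h2; apply: (@cong_trans _ _ (x * v)).
  exact: congMl.
exact: congMr.
Qed.

Lemma cong_sum m (I : Type) (r : seq I) (P : pred I) (F G : I -> rat) :
  (forall i, P i -> cong m (F i) (G i)) ->
  cong m (\sum_(i <- r | P i) F i) (\sum_(i <- r | P i) G i).
Proof.
move=> h; elim/big_rec2: _ => [|i x y Pi hxy]; first exact: cong_refl.
by apply: congD => //; apply: h.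
Qed.

Lemma cong0P m x : cong m x 0 <-> pint (x / p%:R ^+ m).
Proof. by rewrite /cong subr0. Qed.

Lemma congE m x y : cong m x y <-> cong m (x - y) 0.
Proof. by rewrite /cong subr0. Qed.

Lemma cong_pmul m x y : cong m x y <-> cong m.+1 (p%:R * x) (p%:R * y).
Proof.
rewrite /cong exprS -mulrBr.
have hp0 := pnat_neq0.
have hm : p%:R ^+ m != 0 :> rat by rewrite expf_neq0.
have -> : p%:R * (x - y) / (p%:R * p%:R ^+ m) = (x - y) / p%:R ^+ m by field; rewrite hp0 hm.
by [].
Qed.

Lemma cong_weak [m : nat] [x y : rat] : cong m.+1 x y -> cong m x y.
Proof.
rewrite /cong exprS => h.
have := pintM h (pint_nat p).
have hp0 := pnat_neq0.
have hm : p%:R ^+ m != 0 :> rat by rewrite expf_neq0.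
have -> : (x - y) / (p%:R * p%:R ^+ m) * p%:R = (x - y) / p%:R ^+ m by field; rewrite hp0 hm.
by [].
Qed.

Lemma cong_weakn [m k : nat] [x y : rat] : cong (m + k) x y -> cong m x y.
Proof. by elim: k => [|k IH]; rewrite ?addn0 // addnS => /cong_weak. Qed.

Lemma pint_cong x y : pint x -> pint y -> cong 0 x y.
Proof. by rewrite /cong expr0 invr1 mulr1; apply: pintB. Qed.

Lemma cong_pX (m k : nat) [x : rat] : pint x -> cong (m + k) (p%:R ^+ (m + k) * x) 0.
Proof.
move=> h; rewrite /cong subr0 mulrC mulrA mulVf ?mul1r //.
by rewrite expf_neq0 // pnat_neq0.
Qed.

Lemma cong_pXm (m : nat) [x : rat] : pint x -> cong m (p%:R ^+ m * x) 0.
Proof. by move=> h; have := @cong_pX m 0 x h; rewrite addn0. Qed.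

Lemma cong_mulp [m : nat] (k : nat) [x y : rat] : cong m x y -> cong (m + k) (p%:R ^+ k * x) (p%:R ^+ k * y).
Proof.
elim: k => [|k IH]; first by rewrite addn0 expr0 !mul1r.
move=> h; rewrite addnS exprS -!mulrA; apply: (proj1 (cong_pmul _ _ _)); exact: IH.
Qed.

Lemma cong_divp [m k : nat] [x y : rat] : cong (m + k) (p%:R ^+ k * x) (p%:R ^+ k * y) -> cong m x y.
Proof.
elim: k => [|k IH]; first by rewrite addn0 expr0 !mul1r.
by rewrite addnS exprS -!mulrA => /(proj2 (cong_pmul _ _ _)); apply: IH.
Qed.

Lemma ndvd_small m : (0 < m < p)%N -> ~~ (p %| m)%N.
Proof.
move=> /andP [h0 h1]; apply/negP => /(dvdn_leq h0); lia.
Qed.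

Lemma fermat_nat j : ~~ (p %| j)%N -> exists q, (j ^ p.-1 = q * p + 1)%N.
Proof.
move=> hj.
have hj0 : (0 < j)%N by case: j hj => //; rewrite dvdn0.
have h1 : (1 <= j ^ p.-1)%N by rewrite expn_gt0 hj0.
have hpS : p = p.-1.+1 by rewrite prednK // prime_gt0.
have := fermat_little j hp; rewrite {1}hpS expnS => /eqP.
rewrite eqn_mod_dvd; last by rewrite leq_pmulr.
rewrite (_ : j * j ^ p.-1 - j = j * (j ^ p.-1 - 1))%N; last by rewrite mulnBr muln1.
rewrite Euclid_dvdM // (negPf hj) /= => /dvdnP [q hq].
exists q; lia.
Qed.

Lemma fermat_cong j : ~~ (p %| j)%N -> cong 1 ((j%:R : rat) ^+ p.-1) 1.
Proof.
move=> /fermat_nat [q hq]; rewrite /cong -natrX hq expr1 natrD natrM addrK.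
rewrite mulfK; first exact: pint_nat.
exact: pnat_neq0.
Qed.

Lemma pint_bern i : (i < p.-1)%N -> pint (bernoulli i).
Proof.
elim/ltn_ind: i => [[|n]] IH hn; first by rewrite bern0; exact: pint1.
rewrite bernS; apply: pintM.
  apply: pintN; apply: pint_invn => //; apply: ndvd_small; lia.
apply: pint_sum => k _; apply: pintM; first exact: pint_nat.
apply: IH => //; have := ltn_ord k; lia.
Qed.

Let k := (p - 3)%N.

Lemma S_cong : cong 2 (\sum_(m < p) (m%:R : rat) ^+ k) (p%:R * bernoulli k).
Proof.
have hk1 : (k.+1 = p - 2)%N by rewrite /k; lia.
have hkinv : pint ((k.+1)%:R)^-1 by apply: pint_invn => //; apply: ndvd_small; lia.
have e : (k.+1)%:R * \sum_(m < p) (m%:R : rat) ^+ k =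
   \sum_(i < k) ('C(k.+1, i))%:R * bernoulli i * p%:R ^+ (k.+1 - i)
   + (k.+1)%:R * (p%:R * bernoulli k).
  rewrite faulhaber /G -sumrB !big_ord_recr /= !subnn subSnn !expr0 !expr1 subrr addr0.
  rewrite binSn; congr (_ + _).
    apply: eq_bigr => i _; rewrite expr0n.
    rewrite (_ : (k.+1 - i == 0)%N = false); last by apply/negbTE; have := ltn_ord i; lia.
    by rewrite mulr0 subr0.
  by rewrite mulr0 subr0; ring.
have c1 : cong 2 ((k.+1)%:R * \sum_(m < p) (m%:R : rat) ^+ k) ((k.+1)%:R * (p%:R * bernoulli k)).
  rewrite e; rewrite -[X in cong _ _ X]add0r; apply: congD; last exact: cong_refl.
  apply: (@cong_trans _ _ (\sum_(i < k) (0 : rat))); last by rewrite big1 //; exact: cong_refl.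
  apply: cong_sum => i _.
  rewrite (_ : k.+1 - i = 2 + (k.+1 - i - 2))%N; last by have := ltn_ord i; lia.
  rewrite exprD mulrCA; apply: cong_pXm; apply: pintM; last exact: pintX (pint_nat _).
  apply: pintM; first exact: pint_nat.
  apply: pint_bern; have := ltn_ord i; rewrite /k; lia.
have := congMl hkinv c1; rewrite !mulrA mulVf ?mul1r //.
by rewrite pnatr_eq0.
Qed.


Lemma cong_of_eq m a b z : pint z -> a - b = p%:R ^+ m * z -> cong m a b.
Proof. by move=> hz e; apply/congE; rewrite e; apply: cong_pXm. Qed.

Lemma cong_rearr [m : nat] [a b x y : rat] (c : rat) : pint c -> cong m a b -> x - y = c * (a - b) -> cong m x y.
Proof. by move=> hc h e; rewrite /cong e -mulrA; apply: pintM. Qed.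

Lemma pint_invX (x n : nat) : (0 < x < p)%N -> pint ((x%:R ^+ n)^-1).
Proof. by move=> hx; rewrite -exprVn; apply: pintX; apply: pint_invn; apply: ndvd_small. Qed.

Lemma natr_neq0 (x : nat) : (0 < x)%N -> x%:R != 0 :> rat.
Proof. by rewrite pnatr_eq0 -lt0n. Qed.

Definition inv2 (x : nat) : rat := (x%:R ^+ 2)^-1.
Definition inv3 (x : nat) : rat := (x%:R ^+ 3)^-1.

Lemma exp_m2 (x : nat) : (0 < x < p)%N ->
  cong 2 (inv2 (p - x)) (inv2 x + 2%:R * p%:R * inv3 x).
Proof.
move=> hx; have hpx : (0 < p - x < p)%N by lia.
apply: (@cong_of_eq _ _ _ ((3%:R * x%:R - 2%:R * p%:R) * inv3 x * inv2 (p - x))).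
  apply: pintM; last exact: pint_invX.
  apply: pintM; last exact: pint_invX.
  by apply: pintB; apply: pintM; apply: pint_nat.
have hx0 : x%:R != 0 :> rat by apply: natr_neq0; lia.
have hpx0 : (p - x)%:R != 0 :> rat by apply: natr_neq0; lia.
move: hpx0; rewrite /inv2 /inv3 natrB; last by lia.
move=> hpx0; field; by rewrite hx0 hpx0.
Qed.

Lemma exp_pow (x : rat) n : pint x ->
  cong 2 ((x - p%:R) ^+ n) (x ^+ n - n%:R * p%:R * x ^+ n.-1).
Proof.
move=> hx; elim: n => [|n IH]; first by rewrite !expr0 mul0r mul0r subr0; exact: cong_refl.
rewrite exprS; apply: (@cong_trans _ _ ((x - p%:R) * (x ^+ n - n%:R * p%:R * x ^+ n.-1))).
  by apply: congMl => //; apply: pintB => //; apply: pint_nat.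
case: n IH => [|n] IH.
  by rewrite !expr0 !mul0r !subr0 !mulr1 mul1r expr1; exact: cong_refl.
apply: (@cong_of_eq _ _ _ (n.+1%:R * x ^+ n)).
  by apply: pintM; [apply: pint_nat | apply: pintX].
rewrite /= !exprS; ring.
Qed.

Lemma exp_pow_even (y n : nat) : ~~ odd n -> (y <= p)%N ->
  cong 2 ((p - y)%:R ^+ n) (y%:R ^+ n - n%:R * p%:R * y%:R ^+ n.-1).
Proof.
move=> hn hy; rewrite natrB // -opprB exprNn -signr_odd (negPf hn) expr0 mul1r.
by apply: exp_pow; apply: pint_nat.
Qed.

Lemma hp_half : (p./2).*2.+1 = p.
Proof.
have ho : odd p by case: (even_prime hp) => // e; move: hp3; rewrite e.
by rewrite -[RHS](odd_double_half p) ho add1n.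
Qed.

Let h := p./2.

Let A := \sum_(j < h) inv2 j.+1.
Let C := \sum_(j < h) inv3 j.+1.
Let H2 := \sum_(m < h.*2) inv2 m.+1.

Lemma R1 : cong 2 H2 (2%:R * A + 2%:R * p%:R * C).
Proof.
rewrite /H2 split1 hp_half /A /C !mulr_sumr -big_split /=.
apply: cong_sum => j _.
have hj : (0 < j.+1 < p)%N by have := ltn_ord j; have := hp_half; rewrite -/h; lia.
apply: (@cong_trans _ _ (inv2 j.+1 + (inv2 j.+1 + 2%:R * p%:R * inv3 j.+1))).
  by apply: congD; [exact: cong_refl | exact: exp_m2].
rewrite (_ : inv2 j.+1 + (inv2 j.+1 + _) = 2%:R * inv2 j.+1 + 2%:R * p%:R * inv3 j.+1); [exact: cong_refl | ring].
Qed.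

Lemma inv2_double y : (0 < y)%N -> inv2 y.*2 = inv2 y / 4%:R.
Proof.
move=> hy; have h0 := @natr_neq0 _ hy.
rewrite /inv2 -muln2 natrM; field; by rewrite h0.
Qed.

Lemma inv3_double y : (0 < y)%N -> inv3 y.*2 = inv3 y / 8%:R.
Proof.
move=> hy; have h0 := @natr_neq0 _ hy.
rewrite /inv3 -muln2 natrM; field; by rewrite h0.
Qed.

Lemma R2 : cong 2 H2 (A / 2%:R + p%:R * C / 4%:R).
Proof.
rewrite /H2 split2 hp_half /A /C !mulr_suml mulr_sumr mulr_suml -big_split /=.
apply: cong_sum => j _.
have hj : (0 < (j.+1).*2 < p)%N by have := ltn_ord j; have := hp_half; rewrite -/h; lia.
apply: (@cong_trans _ _ (inv2 (j.+1).*2 + (inv2 (j.+1).*2 + 2%:R * p%:R * inv3 (j.+1).*2))).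
  by apply: congD; [exact: cong_refl | exact: exp_m2].
rewrite inv2_double // inv3_double //.
have -> : inv2 j.+1 / 4%:R + (inv2 j.+1 / 4%:R + 2%:R * p%:R * (inv3 j.+1 / 8%:R)) =
  inv2 j.+1 / 2%:R + p%:R * inv3 j.+1 / 4%:R by field.
exact: cong_refl.
Qed.

Lemma pint_inv3 : pint (3%:R^-1).
Proof. by apply: pint_invn; apply: ndvd_small; lia. Qed.

Lemma pint_inv2 : pint (2%:R^-1).
Proof. by apply: pint_invn; apply: ndvd_small; lia. Qed.

Lemma RA : cong 2 A (- (7%:R / 6%:R) * p%:R * C).
Proof.
have := cong_trans (cong_sym R1) R2.
move=> h0; apply: (cong_rearr (2%:R / 3%:R) _ h0).
  by apply: pintM; [exact: pint_nat | exact: pint_inv3].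
by field.
Qed.

Definition u (y : nat) : rat := (y%:R * (p - y)%:R)^-1.

Lemma u_cong y : (0 < y < p)%N -> cong 2 (u y) (- inv2 y - p%:R * inv3 y).
Proof.
move=> hy; have hpy : (0 < p - y < p)%N by lia.
apply: (@cong_of_eq _ _ _ (inv3 y * ((p - y)%:R)^-1)).
  by apply: pintM; [exact: pint_invX | apply: pint_invn; apply: ndvd_small].
have hy0 : y%:R != 0 :> rat by apply: natr_neq0; lia.
have hpy0 : (p - y)%:R != 0 :> rat by apply: natr_neq0; lia.
move: hpy0; rewrite /u /inv2 /inv3 natrB; last by lia.
move=> hpy0; field; by rewrite hy0 hpy0.
Qed.

Let Su := \sum_(j < h) u j.+1.

Lemma pintA : pint A.
Proof. by apply: pint_sum => j _; apply: pint_invX; have := ltn_ord j; have := hp_half; rewrite -/h; lia. Qed.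
Lemma pintC : pint C.
Proof. by apply: pint_sum => j _; apply: pint_invX; have := ltn_ord j; have := hp_half; rewrite -/h; lia. Qed.

Lemma RSu : cong 2 Su (p%:R * C / 6%:R).
Proof.
have e1 : cong 2 Su (- A - p%:R * C).
  rewrite /Su /A /C mulr_sumr -sumrN -sumrB.
  apply: cong_sum => j _; apply: u_cong.
  by have := ltn_ord j; have := hp_half; rewrite -/h; lia.
apply: (cong_trans e1).
have e2 := congB (congN RA) (cong_refl 2 (p%:R * C)).
apply: (cong_trans e2).
rewrite (_ : - (- (7%:R / 6%:R) * p%:R * C) - p%:R * C = p%:R * C / 6%:R); first exact: cong_refl.
by field.
Qed.

Lemma k_even : ~~ odd k.
Proof.
have e : k = (h.-1).*2 by have := hp_half; rewrite /k -/h; lia.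
by rewrite e odd_double.
Qed.

Lemma k_pos : (0 < k)%N.
Proof. rewrite /k; lia. Qed.

Let U := \sum_(j < h) (j.+1)%:R ^+ k : rat.
Let V := \sum_(j < h) (j.+1)%:R ^+ k.-1 : rat.
Let Sp := \sum_(m < h.*2) (m.+1)%:R ^+ k : rat.

Lemma R1p : cong 2 Sp (2%:R * U - k%:R * p%:R * V).
Proof.
rewrite /Sp (split1 _ (fun x => x%:R ^+ k)) hp_half /U /V !mulr_sumr -sumrB.
apply: cong_sum => j _.
have hj : (j.+1 <= p)%N by have := ltn_ord j; have := hp_half; rewrite -/h; lia.
apply: (@cong_trans _ _ ((j.+1)%:R ^+ k + ((j.+1)%:R ^+ k - k%:R * p%:R * (j.+1)%:R ^+ k.-1))).
  apply: congD; first exact: cong_refl.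
  exact: exp_pow_even k_even hj.
rewrite (_ : _ + (_ - _) = 2%:R * (j.+1)%:R ^+ k - k%:R * p%:R * (j.+1)%:R ^+ k.-1); first exact: cong_refl.
ring.
Qed.

Lemma R2p : cong 2 Sp (2%:R ^+ k.+1 * U - k%:R * p%:R * 2%:R ^+ k.-1 * V).
Proof.
rewrite /Sp (split2 _ (fun x => x%:R ^+ k)) hp_half /U /V !mulr_sumr -sumrB.
apply: cong_sum => j _.
have hj : ((j.+1).*2 <= p)%N by have := ltn_ord j; have := hp_half; rewrite -/h; lia.
apply: (@cong_trans _ _ (((j.+1).*2)%:R ^+ k + (((j.+1).*2)%:R ^+ k - k%:R * p%:R * ((j.+1).*2)%:R ^+ k.-1))).
  apply: congD; first exact: cong_refl.
  exact: exp_pow_even k_even hj.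
rewrite -muln2 natrM !exprMn.
have e : (2%:R : rat) ^+ k = 2%:R * 2%:R ^+ k.-1 by rewrite -exprS prednK // k_pos.
rewrite e exprS e.
rewrite (_ : _ + (_ - _) = 2%:R * (2%:R * 2%:R ^+ k.-1) * (j.+1)%:R ^+ k - k%:R * p%:R * 2%:R ^+ k.-1 * ((j.+1)%:R ^+ k.-1)); first exact: cong_refl.
ring.
Qed.

Lemma Sp_eq : \sum_(m < p) (m%:R : rat) ^+ k = Sp.
Proof.
rewrite /Sp -[in LHS]hp_half -/h big_ord_recl /= expr0n.
rewrite (_ : (k == 0)%N = false); last by have := k_pos; lia.
by rewrite add0r.
Qed.

Let T := (2%:R : rat) ^+ k.-1.

Lemma pintT : pint T. Proof. exact: pintX (pint_nat 2). Qed.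
Lemma pintB' : pint (bernoulli k). Proof. apply: pint_bern; rewrite /k; lia. Qed.
Lemma pintV : pint V.
Proof. by apply: pint_sum => j _; apply: pintX; apply: pint_nat. Qed.

Lemma RV1 : cong 1 ((2%:R * T - 1) * bernoulli k) (- (k%:R * T * V)).
Proof.
have e : (2%:R : rat) ^+ k = 2%:R * T by rewrite /T -exprS prednK // k_pos.
have c1 := congB (congMl (pintX k (pint_nat 2)) R1p) R2p.
rewrite exprS e -/T in c1.
have c2 : cong 2 ((2%:R * T - 1) * Sp) (p%:R * (- (k%:R * T * V))).
  apply: (cong_rearr 1 _ c1); first exact: pint1.
  ring.
have c3 : cong 2 ((2%:R * T - 1) * Sp) (p%:R * ((2%:R * T - 1) * bernoulli k)).
  rewrite -Sp_eq; rewrite mulrCA; apply: congMl; last exact: S_cong.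
  by apply: pintB; [apply: pintM; [exact: pint_nat | exact: pintT] | exact: pint1].
apply/(cong_pmul 1); exact: cong_trans (cong_sym c3) c2.
Qed.

Lemma RV : cong 1 V (- 2%:R * bernoulli k).
Proof.
have F2 : cong 1 ((2%:R : rat) ^+ p.-1) 1 by apply: fermat_cong; apply: ndvd_small; lia.
have e8 : (2%:R : rat) ^+ p.-1 = 8%:R * T.
  by rewrite /T (_ : p.-1 = 3 + k.-1)%N ?exprD; [congr (_ * _); rewrite -natrX | rewrite /k; lia].
rewrite e8 in F2.
have Fk : cong 1 (k%:R) (- 3%:R).
  apply: (@cong_of_eq _ _ _ 1); first exact: pint1.
  rewrite /k natrB; last by lia.
  by rewrite expr1 mulr1; ring.
have c1 := congMl (pint_nat 8) RV1.
have L : cong 1 (8%:R * ((2%:R * T - 1) * bernoulli k)) (- 6%:R * bernoulli k).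
  apply: (cong_rearr (2%:R * bernoulli k) _ F2); first by apply: pintM; [exact: pint_nat | exact: pintB'].
  ring.
have R : cong 1 (8%:R * - (k%:R * T * V)) (3%:R * V).
  have c := congM (pint_nat k) pint1 Fk F2.
  have c' := congMr pintV c.
  apply: (cong_rearr (- V) _ c); first exact: pintN pintV.
  ring.
have c2 := cong_trans (cong_trans (cong_sym L) c1) R.
apply: (cong_rearr (- 3%:R^-1) _ c2); first exact: pintN pint_inv3.
by field.
Qed.

Lemma RCV : cong 1 C V.
Proof.
apply: cong_sum => j _.
have hj : (0 < j.+1 < p)%N by have := ltn_ord j; have := hp_half; rewrite -/h; lia.
have F := cong_sym (@fermat_cong _ (@ndvd_small _ hj)).
have c := congMl (@pint_invX _ 3 hj) F.
have e : (j.+1%:R ^+ 3)^-1 * j.+1%:R ^+ p.-1 = (j.+1)%:R ^+ k.-1 :> rat.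
  rewrite (_ : p.-1 = 3 + k.-1)%N ?exprD; last by rewrite /k; lia.
  rewrite mulrA mulVf ?mul1r //; apply: expf_neq0; exact: natr_neq0.
by rewrite e mulr1 in c.
Qed.

Lemma RSu2 : cong 2 Su (- (p%:R * bernoulli k) / 3%:R).
Proof.
have c := cong_trans RCV RV.
have c2 := proj1 (cong_pmul 1 _ _) c.
apply: (cong_trans RSu).
apply: (cong_rearr (6%:R^-1) _ c2); first by apply: pint_invn; rewrite (_ : 6 = 2 * 3)%N // Euclid_dvdM // negb_or !ndvd_small //; lia.
by field.
Qed.

Lemma fact_prodR n : (n`!)%:R = \prod_(i < n) (i.+1)%:R :> rat.
Proof.
elim: n => [|n IH]; first by rewrite big_ord0.
by rewrite factS natrM big_ord_recr IH /= mulrC.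
Qed.

Definition f (m : nat) : rat := (p%:R / 2%:R - m%:R) * (p.*2 - m)%:R / m%:R ^+ 2.

Lemma LHS_eq : binq (p%:R / 2%:R - 1) p.-1 * ('C((2 * p).-1, p.-1))%:R =
  \prod_(i < p.-1) f i.+1.
Proof.
set P := \prod_(i < p.-1) (i.+1)%:R : rat.
have hP : (p.-1)`!%:R = P by rewrite fact_prodR.
have hP0 : P != 0 by rewrite -hP natr_neq0 // fact_gt0.
have e := congr1 (fun n => n%:R : rat) (bin_ffact ((2 * p).-1) p.-1).
rewrite /= natrM ffact_prod natr_prod hP in e.
rewrite -[('C(_, _))%:R](mulfK hP0) e /binq hP.
rewrite /f big_split /= big_split /= prodfV prodrXl -/P.
rewrite (eq_bigr (fun i : 'I_p.-1 => p%:R / 2%:R - (i.+1)%:R)); last first.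
  by move=> i _; rewrite mulrS; ring.
rewrite [\prod_(i < p.-1) ((2 * p).-1 - i)%:R](eq_bigr (fun i : 'I_p.-1 => (p.*2 - i.+1)%:R)); last first.
  by move=> i _; congr (_%:R); have := ltn_ord i; lia.
by field.
Qed.

Definition cc (y : nat) : rat := 7%:R / 4%:R * u y - p%:R ^+ 2 * (u y) ^+ 2 / 2%:R.

Lemma f_pair y : (0 < y < p)%N -> f y * f (p - y) = 1 + p%:R ^+ 2 * cc y.
Proof.
move=> hy.
have hy0 : y%:R != 0 :> rat by apply: natr_neq0; lia.
have hpy0 : (p - y)%:R != 0 :> rat by apply: natr_neq0; lia.
move: hpy0; rewrite /f /cc /u.
rewrite (_ : (p.*2 - (p - y)) = p + y)%N; last by lia.
rewrite !natrB; try lia.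
rewrite natrD -mul2n natrM => hpy0.
field; by rewrite hy0 hpy0.
Qed.

Lemma prod_cong n (c : nat -> rat) : (forall j, (j < n)%N -> pint (c j)) ->
  cong 4 (\prod_(j < n) (1 + p%:R ^+ 2 * c j)) (1 + p%:R ^+ 2 * \sum_(j < n) c j).
Proof.
elim: n => [|n IH] hc; first by rewrite !big_ord0 mulr0 addr0; exact: cong_refl.
rewrite !big_ord_recr /=.
have hcn := hc n (ltnSn n).
have IH' := IH (fun j hj => hc j (ltnW hj)).
have hpc : pint (1 + p%:R ^+ 2 * c n) by apply: pintD; [exact: pint1 | apply: pintM; [apply: pintX; exact: pint_nat | exact: hcn]].
apply: (cong_trans (congMr hpc IH')).
apply: (@cong_of_eq _ _ _ ((\sum_(i < n) c i) * c n)).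
  by apply: pintM => //; apply: pint_sum => i _; apply: hc; have := ltn_ord i; lia.
ring.
Qed.

Lemma pint_u [y : nat] : (0 < y < p)%N -> pint (u y).
Proof.
move=> hy; rewrite /u invfM; apply: pintM; apply: pint_invn; apply: ndvd_small; lia.
Qed.

Lemma pint_cc [y : nat] : (0 < y < p)%N -> pint (cc y).
Proof.
move=> hy; have hu := pint_u hy.
rewrite /cc; apply: pintB; apply: pintM.
- by apply: pintM; [exact: pint_nat | apply: pint_invn; rewrite (_ : 4 = 2 * 2)%N // Euclid_dvdM // negb_or !ndvd_small //; lia].
- exact: hu.
- by apply: pintM; apply: pintX => //; exact: pint_nat.
- exact: pint_inv2.
Qed.

Theorem main_cong : cong 4
    (binq (p%:R / 2%:R - 1) p.-1 * ('C((2 * p).-1, p.-1))%:R)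
    (1 - 7%:R / 12%:R * (p%:R) ^+ 3 * bernoulli (p - 3)).
Proof.
rewrite LHS_eq (_ : p.-1 = h.*2); last by have := hp_half; rewrite -/h; lia.
rewrite prod_split1 hp_half.
have hj : forall j : 'I_h, (0 < j.+1 < p)%N.
  by move=> j; have := ltn_ord j; have := hp_half; rewrite -/h; lia.
rewrite (eq_bigr (fun j : 'I_h => 1 + p%:R ^+ 2 * cc j.+1)); last first.
  by move=> j _; apply: f_pair.
apply: (cong_trans (@prod_cong _ (fun j => cc j.+1) _)).
  move=> j hjh; apply: pint_cc; have := hp_half; rewrite -/h; lia.
have c1 : cong 2 (\sum_(j < h) cc j.+1) (7%:R / 4%:R * Su).
  rewrite /Su mulr_sumr; apply: cong_sum => j _.
  apply: (@cong_of_eq _ _ _ (- (u j.+1) ^+ 2 / 2%:R)).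
    by apply: pintM; [apply: pintN; apply: pintX; exact: pint_u | exact: pint_inv2].
  rewrite /cc; ring.
have h74 : pint (7%:R / 4%:R).
  by apply: pintM; [exact: pint_nat | apply: pint_invn; rewrite (_ : 4 = 2 * 2)%N // Euclid_dvdM // negb_or !ndvd_small //; lia].
have c2 := congMl h74 RSu2.
have c4 := cong_mulp 2 (cong_trans c1 c2).
have c5 := congD (cong_refl 4 1) c4.
apply: (cong_trans c5).
rewrite /k (_ : 1 + p%:R ^+ 2 * (7%:R / 4%:R * (- (p%:R * bernoulli (p - 3)) / 3%:R)) =
  1 - 7%:R / 12%:R * p%:R ^+ 3 * bernoulli (p - 3)); first exact: cong_refl.
by field.
Qed.

End PInt.

Theorem mainTheorem14 (p : nat) (hp : prime p) (hp3 : (3 < p)%N) :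
  congr_mod_pow p 4
    (binq (p%:R / 2 - 1) p.-1 * ('C((2 * p).-1, p.-1))%:R)
    (1 - 7%:R / 12%:R * (p%:R) ^+ 3 * bernoulli (p - 3)).
Proof.
have := @main_cong p hp hp3.
by rewrite /cong /pint /congr_mod_pow dvdzE natrX.
Qed.
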